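(* Consider a network as described in the context with $\Delta_{ij}>0$ for all $i\ne j$, and let $r=1+\big\lfloor \max_i\theta_i/\min_{i\ne j}\Delta_{ij}\big\rfloor$. If at some spiking instant $t_n$ at least $r$ cells spike (i.e. $\#I(t_n)\ge r$), then all cells spike at $t_n$, i.e. $I(t_n)=\{1,\dots,m\}$.
   Context: Network model. Fix an integer $m\ge 2$ (the number of units, or cells). For each $i\in\{1,\dots,m\}$ the following data are given. - $X_i$ is a compact finite-dimensional smooth manifold. - $f_i$ is a continuous vector field on $X_i$. - $S_i:X_i\to\mathbb R$ is a $C^1$ function, called the satisfaction level. - $\theta_i>0$ is a constant, called the goal. These are required to satisfy: there is $v_i>0$ with $\nabla S_i(x)\cdot f_i(x)>v_i$ for every $x\in X_i$ with $S_i(x)<\theta_i$. Real interaction weights $\Delta_{ij}$ are given for $i\ne j$. The global state $\mathbf x(t)=(x_1(t),\dots,x_m(t))\in\prod_i X_i$, $t\ge 0$, evolves as follows. Spiking instants $0\le t_0<t_1<\cdots$ are the instants at which at least one cell spikes. Between consecutive spiking instants each $x_i$ evolves independently by $dx_i/dt=f_i(x_i)$. At an instant $t_n$, write $S_j(x_j(t_n^-))=\lim_{t\to t_n^-}S_j(x_j(t))$. The coalition is $I(t_n)=\bigcup_{p\ge 0}I_p(t_n)$, where: - $I_0(t_n)$ is the set of cells $i$ with $S_i(x_i(t_n^-))\ge\theta_i$; - for $p\ge1$, $I_p(t_n)$ is the set of cells $j\notin\bigcup_{k<p}I_k(t_n)$ with $S_j(x_j(t_n^-))+\sum_{k<p}\sum_{i\in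 I_k(t_n)}\Delta_{ij}\ge\theta_j$. The spiking instants are exactly the instants with $I_0(t_n)\neq\emptyset$, and the cells in $I(t_n)$ are said to spike at $t_n$. At $t_n$ the state jumps as follows: - for $j\in I(t_n)$, $x_j(t_n)$ is a point with $S_j(x_j(t_n))=0$; - for $j\notin I(t_n)$, $x_j(t_n)$ is a point with $S_j(x_j(t_n))=S_j(x_j(t_n^-))+\sum_{i\in I(t_n),\,i\ne j}\Delta_{ij}$. Initial states are assumed to satisfy $S_i(x_i(0))\in[0,\theta_i)$ for all $i$. The network is cooperative if $\Delta_{ij}\ge 0$ for all $i\ne j$. A cooperative network is large enough if $\sqrt m\ge 1+\frac{\max_i\theta_i}{\min_{i\ne j}\Delta_{ij}}$; in particular this requires $\Delta_{ij}>0$ for all $i\ne j$. The grand coalition is exhibited at $t_n$ if $I(t_n)=\{1,\dots,m\}$. *)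

(* Defs.v *)
From Stdlib Require Import Reals Lra List ClassicalEpsilon ZArith Bool.
Open Scope bool_scope.
Open Scope R_scope.

(* Cells are indexed by 0, ..., m-1 (the paper's 1..m).  Satisfaction levels
   of cell i along the trajectory are abstracted as sigma i : R -> R, i.e.
   sigma i t = S_i(x_i(t)). *)

Definition Rleb (x y : R) : bool := if Rle_dec x y then true else false.

Definition sum_over (m : nat) (P : nat -> bool) (g : nat -> R) : R :=
  fold_right Rplus 0 (map g (filter P (seq 0 m))).

(* Given the set C = I_0 u ... u I_{p-1} of cells already in the coalition,
   the cells of the next level I_p (pre-spike satisfaction values s). *)
Definition next_level (m : nat) (theta : nat -> R) (Delta : nat -> nat -> R)
  (s : nat -> R) (C : nat -> bool) (j : nat) : bool :=
  Nat.ltb j m && negb (C j) &&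
  Rleb (theta j) (s j + sum_over m C (fun i => Delta i j)).

Fixpoint cum (m : nat) (theta : nat -> R) (Delta : nat -> nat -> R)
  (s : nat -> R) (p : nat) : nat -> bool :=
  match p with
  | O => fun _ => false
  | S p' => fun j => cum m theta Delta s p' j ||
                     next_level m theta Delta s (cum m theta Delta s p') j
  end.

Definition level (m : nat) (theta : nat -> R) (Delta : nat -> nat -> R)
  (s : nat -> R) (p : nat) : nat -> bool :=
  next_level m theta Delta s (cum m theta Delta s p).

Definition in_coalition (m : nat) (theta : nat -> R) (Delta : nat -> nat -> R)
  (s : nat -> R) (j : nat) : Prop :=
  exists p, level m theta Delta s p j = true.

Definition in_coalitionb (m : nat) (theta : nat -> R) (Delta : nat -> nat -> R)
  (s : nat -> R) (j : nat) : bool :=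
  if excluded_middle_informative (in_coalition m theta Delta s j)
  then true else false.

Definition start (t : nat -> R) (k : nat) : R :=
  match k with O => 0 | S k' => t k' end.

(* A run of the network up to (and including) the spiking instant t_n.
   t 0 < ... < t n are the first n+1 spiking instants, sigma i is the
   satisfaction level S_i(x_i(.)) of cell i, pre k i = S_i(x_i(t_k^-)). *)
Definition network_run (m : nat) (theta v : nat -> R) (Delta : nat -> nat -> R)
  (sigma : nat -> R -> R) (t : nat -> R) (pre : nat -> nat -> R) (n : nat)
  : Prop :=
  0 < t O /\
  (forall k, (k < n)%nat -> t k < t (S k)) /\
  (forall i, (i < m)%nat -> 0 <= sigma i 0 < theta i) /\
  (forall k i, (k <= n)%nat -> (i < m)%nat ->
     (* between spikes: no spiking instant, and the flow dx_i/dt = f_i(x_i)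
        gives d/dt S_i(x_i) = grad S_i . f_i > v_i while S_i < theta_i *)
     (forall tau, start t k < tau < t k ->
        sigma i tau < theta i /\
        exists d, derivable_pt_lim (sigma i) tau d /\
                  (sigma i tau < theta i -> v i < d)) /\
     (* the flow starts at the post-jump state at start t k *)
     limit1_in (sigma i) (fun tau => start t k < tau < t k)
               (sigma i (start t k)) (start t k) /\
     limit1_in (sigma i) (fun tau => start t k < tau < t k)
               (pre k i) (t k) /\
     (in_coalition m theta Delta (pre k) i -> sigma i (t k) = 0) /\
     (~ in_coalition m theta Delta (pre k) i ->
        sigma i (t k) = pre k i +
          sum_over m (fun j => in_coalitionb m theta Delta (pre k) j
                               && negb (Nat.eqb j i))
                   (fun j => Delta j i))) /\
  (* t_k is a spiking instant: I_0(t_k) is nonempty *)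
  (forall k, (k <= n)%nat -> exists i, (i < m)%nat /\ theta i <= pre k i).

(* Main.v *)
Require Import Defs.
From Coquelicot Require Import Coquelicot.
From Stdlib Require Import Reals List ZArith Lra Lia Classical Bool.
Open Scope R_scope.
Open Scope R_scope.

Lemma incr_on (f : R -> R) a b :
  (forall x, a < x < b -> exists d, derivable_pt_lim f x d /\ 0 < d) ->
  forall x y, a < x -> x < y -> y < b -> f x < f y.
Proof.
  intros H x y ax xy yb.
  apply (incr_function f (Finite a) (Finite b) (fun z => Derive f z)); simpl; auto.
  - intros z h1 h2. destruct (H z (conj h1 h2)) as [d [hd _]].
    apply is_derive_Reals in hd. rewrite (is_derive_unique _ _ _ hd). exact hd.
  - intros z h1 h2. destruct (H z (conj h1 h2)) as [d [hd hp]].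
    apply is_derive_Reals in hd. rewrite (is_derive_unique _ _ _ hd). lra.
Qed.

Lemma lim_le (f : R -> R) a b L :
  a < b ->
  (forall x y, a < x -> x < y -> y < b -> f x < f y) ->
  limit1_in f (fun tau => a < tau < b) (f a) a ->
  limit1_in f (fun tau => a < tau < b) L b -> f a <= L.
Proof.
  intros ab Hm H1 H2.
  destruct (Rle_dec (f a) L) as [h|h]; auto. exfalso.
  set (e := (f a - L) / 2).
  destruct (H1 e) as [d1 [d1p Hd1]]. unfold e; lra.
  destruct (H2 e) as [d2 [d2p Hd2]]. unfold e; lra.
  set (x := a + Rmin d1 (b - a) / 2).
  assert (hx1 : a < x) by (unfold x; assert (0 < Rmin d1 (b-a)) by (apply Rmin_pos; lra); lra).
  assert (hx2 : x < b) by (unfold x; assert (Rmin d1 (b-a) <= b - a) by apply Rmin_r;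
          assert (0 < Rmin d1 (b-a)) by (apply Rmin_pos; lra); lra).
  assert (hx3 : x - a < d1) by (unfold x; assert (Rmin d1 (b-a) <= d1) by apply Rmin_l;
          assert (0 < Rmin d1 (b-a)) by (apply Rmin_pos; lra); lra).
  set (y := Rmax x (b - d2 / 2)).
  assert (hy1 : x <= y) by apply Rmax_l.
  assert (hy2 : y < b) by (unfold y; apply Rmax_lub_lt; lra).
  assert (hy3 : b - y < d2) by (unfold y; assert (b - d2/2 <= Rmax x (b - d2/2)) by apply Rmax_r; lra).
  specialize (Hd1 x). specialize (Hd2 y).
  simpl in Hd1, Hd2. unfold R_dist in Hd1, Hd2.
  assert (A : Rabs (f x - f a) < e).
  { apply Hd1. split. lra. rewrite Rabs_right; lra. }
  assert (B : Rabs (f y - L) < e).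
  { apply Hd2. split. lra. rewrite Rabs_left; lra. }
  apply Rabs_def2 in A. apply Rabs_def2 in B.
  assert (f x <= f y).
  { destruct (Rle_lt_or_eq_dec _ _ hy1) as [hl|he]. left; apply Hm; lra. rewrite he; lra. }
  unfold e in *; lra.
Qed.
Definition sumL (g : nat -> R) (L : list nat) := fold_right Rplus 0 (map g L).

Lemma sumL_nonneg g L : (forall x, In x L -> 0 <= g x) -> 0 <= sumL g L.
Proof. unfold sumL in *.
  induction L; simpl; intros H. lra.
  assert (0 <= g a) by auto. assert (0 <= sumL g L) by auto. unfold sumL in *; simpl; lra.
Qed.

Lemma rem_le g a L : (forall x, In x L -> 0 <= g x) -> sumL g (remove Nat.eq_dec a L) <= sumL g L.
Proof. unfold sumL in *.
  induction L; simpl; intros H. lra.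
  assert (0 <= g a0) by auto. assert (IH := IHL (fun x h => H x (or_intror h))).
  destruct (Nat.eq_dec a a0); unfold sumL in *; simpl; lra.
Qed.

Lemma rem_in g a L : In a L -> (forall x, In x L -> 0 <= g x) ->
  g a + sumL g (remove Nat.eq_dec a L) <= sumL g L.
Proof. unfold sumL in *.
  induction L; simpl; intros Hi H. destruct Hi.
  destruct (Nat.eq_dec a a0).
  - subst. assert (h := rem_le g a0 L (fun x h => H x (or_intror h))). unfold sumL in *; simpl; lra.
  - destruct Hi as [e|Hi]. congruence.
    assert (IH := IHL Hi (fun x h => H x (or_intror h))). unfold sumL in *; simpl; lra.
Qed.

Lemma sum_sub g l L : NoDup l -> incl l L -> (forall x, In x L -> 0 <= g x) ->
  sumL g l <= sumL g L.
Proof. unfold sumL in *.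
  revert L; induction l as [|a l IH]; intros L Hn Hi H.
  - unfold sumL; simpl. apply sumL_nonneg; auto.
  - inversion Hn; subst.
    assert (aL : In a L) by (apply Hi; left; auto).
    assert (h1 := rem_in g a L aL H).
    assert (h2 : sumL g l <= sumL g (remove Nat.eq_dec a L)).
    { apply IH; auto.
      - intros x hx. apply in_in_remove. intro; subst; auto. apply Hi; right; auto.
      - intros x hx. apply in_remove in hx. apply H; tauto. }
    unfold sumL in *; simpl; lra.
Qed.

Lemma sum_lb g l mu : (forall x, In x l -> mu <= g x) -> INR (length l) * mu <= sumL g l.
Proof. unfold sumL in *.
  induction l as [|a l IHl]; intros H. simpl; lra.
  assert (mu <= g a) by (apply H; left; auto). assert (h := IHl (fun x h => H x (or_intror h))).
  change (length (a :: l)) with (S (length l)). rewrite S_INR. simpl. lra.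
Qed.

Lemma start_lt t n k : 0 < t O -> (forall k, (k < n)%nat -> t k < t (S k)) -> (k <= n)%nat -> start t k < t k.
Proof. intros h0 hi hk. destruct k; simpl; [auto | apply hi; lia]. Qed.

Lemma pre_nonneg m theta v Delta sigma t pre n :
  (forall i j, (i < m)%nat -> (j < m)%nat -> i <> j -> 0 < Delta i j) ->
  (forall i, (i < m)%nat -> 0 < v i) ->
  network_run m theta v Delta sigma t pre n ->
  forall k, (k <= n)%nat -> forall i, (i < m)%nat -> 0 <= pre k i.
Proof.
  intros hD hv [ht0 [hinc [hinit [hrun hspike]]]].
  assert (key : forall k, (k <= n)%nat -> forall i, (i < m)%nat -> 0 <= sigma i (start t k) -> 0 <= pre k i).
  { intros k hk i hi hs.
    destruct (hrun k i hk hi) as [hint [hl1 [hl2 _]]].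
    assert (hlt := start_lt t n k ht0 hinc hk).
    assert (h := lim_le (sigma i) (start t k) (t k) (pre k i) hlt).
    assert (sigma i (start t k) <= pre k i); [|lra].
    apply h; auto. apply incr_on. intros x hx. destruct (hint x hx) as [hth [d [hd hd2]]].
    exists d; split; auto. specialize (hv i hi). specialize (hd2 hth). lra. }
  assert (st : forall k, (k <= n)%nat -> forall i, (i < m)%nat -> 0 <= sigma i (start t k)).
  { induction k; intros hk i hi.
    - simpl. destruct (hinit i hi); lra.
    - simpl. assert (hp : 0 <= pre k i) by ((apply key; [lia|auto|apply IHk; lia])).
      destruct (hrun k i ltac:(lia) hi) as [_ [_ [_ [j1 j2]]]].
      destruct (classic (in_coalition m theta Delta (pre k) i)) as [c|c].
      + rewrite j1; auto; lra.
      + rewrite j2; auto. unfold sum_over.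
        assert (0 <= sumL (fun j => Delta j i) (filter (fun j => in_coalitionb m theta Delta (pre k) j
                               && negb (Nat.eqb j i)) (seq 0 m))); [|unfold sumL in *; lra].
        apply sumL_nonneg. intros x hx. apply filter_In in hx. destruct hx as [hx1 hx2].
        apply in_seq in hx1. apply andb_true_iff in hx2. destruct hx2 as [_ hx2].
        apply negb_true_iff, Nat.eqb_neq in hx2. left; apply hD; lia. }
  intros k hk i hi. apply key; auto.
Qed.

Lemma cum_level m theta Delta s p j : cum m theta Delta s p j = true -> exists q, level m theta Delta s q j = true.
Proof.
  induction p; simpl. discriminate. intros h. apply orb_true_iff in h. destruct h as [h|h]; eauto.
Qed.

Lemma cum_mono m theta Delta s p q j : cum m theta Delta s p j = true -> cum m theta Delta s (q + p) j = true.
Proof. induction q; simpl; auto. intros h. rewrite IHq; auto. Qed.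

Lemma cum_list m theta Delta s l : (forall x, In x l -> in_coalition m theta Delta s x) ->
  exists P, forall x, In x l -> cum m theta Delta s P x = true.
Proof.
  induction l as [|a l IH]; intros H. exists O; intros x [].
  destruct IH as [P HP]. intros x hx; apply H; right; auto.
  destruct (H a (or_introl eq_refl)) as [q hq].
  exists (S q + P)%nat. intros x [e|hx].
  - subst. replace (S q + P)%nat with (P + S q)%nat by lia. apply cum_mono. simpl.
    unfold level in hq. rewrite hq. apply orb_true_r.
  - apply cum_mono; auto.
Qed.
Theorem mainTheorem5
  (m : nat) (theta v : nat -> R) (Delta : nat -> nat -> R)
  (sigma : nat -> R -> R) (t : nat -> R) (pre : nat -> nat -> R) (n : nat)
  (Mth mu : R) :
  (2 <= m)%nat ->
  (forall i, (i < m)%nat -> 0 < theta i) ->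
  (forall i, (i < m)%nat -> 0 < v i) ->
  (forall i j, (i < m)%nat -> (j < m)%nat -> i <> j -> 0 < Delta i j) ->
  (* Mth = max_i theta_i *)
  (forall i, (i < m)%nat -> theta i <= Mth) ->
  (exists i, (i < m)%nat /\ theta i = Mth) ->
  (* mu = min_{i <> j} Delta_ij *)
  (forall i j, (i < m)%nat -> (j < m)%nat -> i <> j -> mu <= Delta i j) ->
  (exists i j, (i < m)%nat /\ (j < m)%nat /\ i <> j /\ Delta i j = mu) ->
  network_run m theta v Delta sigma t pre n ->
  (* #I(t_n) >= r = 1 + floor(Mth / mu) *)
  (exists l : list nat, NoDup l /\
     (forall j, In j l -> (j < m)%nat /\ in_coalition m theta Delta (pre n) j) /\
     (1 + Int_part (Mth / mu) <= Z.of_nat (length l))%Z) ->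
  forall j, (j < m)%nat -> in_coalition m theta Delta (pre n) j.
Proof.
  intros hm hth hv hD hM [i0 [hi0 hMe]] hmu [a [b [ha [hb [hab hmue]]]]] hrun [l [hnd [hl hlen]]] j hj.
  assert (mup : 0 < mu) by (rewrite <- hmue; apply hD; auto).
  apply NNPP; intro nc.
  destruct (cum_list m theta Delta (pre n) l (fun x h => proj2 (hl x h))) as [P HP].
  assert (cj : cum m theta Delta (pre n) P j = false).
  { destruct (cum m theta Delta (pre n) P j) eqn:e; auto. exfalso; apply nc.
    apply (cum_level _ _ _ _ _ _ e). }
  assert (nl : next_level m theta Delta (pre n) (cum m theta Delta (pre n) P) j = false).
  { destruct (next_level m theta Delta (pre n) (cum m theta Delta (pre n) P) j) eqn:e; auto.
    exfalso; apply nc. exists P. exact e. }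
  unfold next_level in nl. rewrite cj in nl. apply Nat.ltb_lt in hj as hj'. rewrite hj' in nl.
  simpl in nl. unfold Rleb in nl. destruct (Rle_dec _ _) as [_|hlt]; [discriminate|].
  apply Rnot_le_lt in hlt.
  assert (hp := pre_nonneg m theta v Delta sigma t pre n hD hv hrun n (le_n n) j hj).
  set (g := fun i => Delta i j) in *.
  assert (s1 : sumL g l <= sum_over m (cum m theta Delta (pre n) P) g).
  { unfold sum_over. apply sum_sub; auto.
    - intros x hx. apply filter_In. split. apply in_seq. destruct (hl x hx); lia. auto.
    - intros x hx. apply filter_In in hx. destruct hx as [h1 h2]. apply in_seq in h1.
      left. unfold g. apply hD; try lia. intro; subst; congruence. }
  assert (s2 : INR (length l) * mu <= sumL g l).
  { apply sum_lb. intros x hx. unfold g. apply hmu. destruct (hl x hx); auto. auto.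
    intro; subst. apply nc. apply (hl j hx). }
  assert (hI := base_Int_part (Mth / mu)).
  assert (hz : IZR (1 + Int_part (Mth / mu)) <= INR (length l)).
  { rewrite INR_IZR_INZ. apply IZR_le. exact hlen. }
  rewrite plus_IZR in hz.
  assert (Mth / mu < INR (length l)) by lra.
  assert (Mth < INR (length l) * mu).
  { replace Mth with (Mth / mu * mu) by (field; lra). apply Rmult_lt_compat_r; auto. }
  assert (theta j <= Mth) by auto.
  lra.
Qed.
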